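(* Let $\eta>0$, let $\ell_i^{(1)},\dots,\ell_i^{(T)}\in\mathbb{R}^{n_i}$ be an arbitrary sequence of vectors (with $\ell_i^{(0)}=0$), and let $x_i^{(1)},\dots,x_i^{(T)}$ be the Optimistic Hedge iterates with step size $\eta$ on this sequence. Define $\tilde x_i^{(0)}$ to be the uniform distribution on $[n_i]$ and, for $t\in[T]$, $\tilde x_i^{(t)}(j)=\frac{x_i^{(t)}(j)\exp(-\eta(\ell_i^{(t)}(j)-\ell_i^{(t-1)}(j)))}{\sum_kx_i^{(t)}(k)\exp(-\eta(\ell_i^{(t)}(k)-\ell_i^{(t-1)}(k)))}$. Then for every $x^\star\in\Delta^{n_i}$, $$\sum_{t=1}^T\langle x_i^{(t)}-x^\star,\ell_i^{(t)}\rangle\le\frac{\ln n_i}{\eta}+\sum_{t=1}^T\|x_i^{(t)}-\tilde x_i^{(t)}\|^*_{x_i^{(t)}}\sqrt{\mathrm{Var}_{x_i^{(t)}}(\ell_i^{(t)}-\ell_i^{(t-1)})}-\frac1\eta\sum_{t=1}^T\mathrm{KL}(\tilde x_i^{(t)};x_i^{(t)})-\frac1\eta\sum_{t=1}^T\mathrm{KL}(x_i^{(t)};\tilde x_i^{(t-1)}).$$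
   Context: Optimistic Hedge: $x_i^{(1)}$ uniform on $[n_i]$, $x_i^{(t+1)}(j)\propto x_i^{(t)}(j)\exp(-\eta(2\ell_i^{(t)}(j)-\ell_i^{(t-1)}(j)))$. For full-support $P\in\Delta^n$ and $v\in\mathbb{R}^n$, $\|v\|^*_P=\sqrt{\sum_jv(j)^2/P(j)}$ and $\mathrm{Var}_P(v)=\sum_jP(j)(v(j)-\langle P,v\rangle)^2$. $\mathrm{KL}(P;Q)=\sum_jP(j)\ln(P(j)/Q(j))$ with the natural logarithm; $\ln n_i$ is the natural logarithm. *)

(* Defs.v *)
From HB Require Import structures.
From mathcomp Require Import all_boot all_order all_algebra.
From mathcomp Require Import all_classical all_reals all_analysis.
Set Implicit Arguments. Unset Strict Implicit. Unset Printing Implicit Defensive.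
Import Order.TTheory GRing.Theory Num.Theory.
Local Open Scope ring_scope.

Section OH.
Variables (R : realType) (n : nat).

Definition uniform_dist : 'I_n -> R := fun _ => (n%:R)^-1.

Definition in_simplex (P : 'I_n -> R) : Prop :=
  (forall j, 0 <= P j) /\ \sum_(j < n) P j = 1.

Definition mw_update (P v : 'I_n -> R) : 'I_n -> R :=
  fun j => P j * expR (v j) / \sum_(k < n) P k * expR (v k).

Definition loss0 (ell : nat -> 'I_n -> R) (t : nat) : 'I_n -> R :=
  if t is t'.+1 then ell t else fun _ => 0.

(* Optimistic Hedge iterates: oh_iter eta ell t = x^(t) for t >= 1,
   x^(1) uniform, x^(t+1)(j) ∝ x^(t)(j) exp(-eta (2 ell^(t)(j) - ell^(t-1)(j))).
   (The value at t = 0 is unused; it is set to uniform.) *)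
Fixpoint oh_iter (eta : R) (ell : nat -> 'I_n -> R) (t : nat) : 'I_n -> R :=
  match t with
  | 0 => uniform_dist
  | 1 => uniform_dist
  | (s.+1) as t1 =>
      mw_update (oh_iter eta ell s)
        (fun j => - eta * (2 * loss0 ell s j - loss0 ell s.-1 j))
  end.

Definition oh_tilde (eta : R) (ell : nat -> 'I_n -> R) (t : nat) : 'I_n -> R :=
  if t is t'.+1 then
    mw_update (oh_iter eta ell t)
      (fun j => - eta * (loss0 ell t j - loss0 ell t' j))
  else uniform_dist.

Definition dotv (u v : 'I_n -> R) : R := \sum_(j < n) u j * v j.

Definition dual_norm (P v : 'I_n -> R) : R :=
  Num.sqrt (\sum_(j < n) v j ^+ 2 / P j).

Definition varP (P v : 'I_n -> R) : R :=
  \sum_(j < n) P j * (v j - dotv P v) ^+ 2.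

Definition KL (P Q : 'I_n -> R) : R :=
  \sum_(j < n) P j * ln (P j / Q j).

End OH.

(* Main.v *)
Require Import Defs.
From HB Require Import structures.
From mathcomp Require Import all_boot all_order all_algebra.
From mathcomp Require Import all_classical all_reals all_analysis.
From mathcomp Require Import lra ring.
Import Order.TTheory GRing.Theory Num.Theory.
Set Implicit Arguments. Unset Strict Implicit.
Local Open Scope ring_scope.

Definition pos_dist (R : realType) (n : nat) (P : 'I_n -> R) : Prop :=
  (forall j, 0 < P j) /\ \sum_(j < n) P j = 1.

Lemma Z_gt0 (R : realType) (n : nat) (P v : 'I_n -> R) :
  (0 < n)%N -> (forall j, 0 < P j) -> 0 < \sum_(k < n) P k * expR (v k).
Proof.
move=> n0 Pp.
rewrite (bigD1 (Ordinal n0)) //=.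
apply: (@lt_le_trans _ _ (P (Ordinal n0) * expR (v (Ordinal n0)) + 0)).
  by rewrite addr0 mulr_gt0 // expR_gt0.
rewrite lerD2l; apply: sumr_ge0 => i _; by rewrite mulr_ge0 // ?ltW // expR_gt0.
Qed.

Lemma mw_pos (R : realType) (n : nat) (P v : 'I_n -> R) :
  (0 < n)%N -> pos_dist P -> pos_dist (mw_update P v).
Proof.
move=> n0 [Pp _]; have Z0 := Z_gt0 v n0 Pp; split.
  by move=> j; rewrite /mw_update divr_gt0 // mulr_gt0 // expR_gt0.
rewrite /mw_update -mulr_suml mulfV //; exact: lt0r_neq0.
Qed.

Lemma mwK (R : realType) (n : nat) (P v w : 'I_n -> R) :
  (0 < n)%N -> pos_dist P ->
  mw_update (mw_update P v) w = mw_update P (fun j => v j + w j).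
Proof.
move=> n0 [Pp _]; have Z0 := Z_gt0 v n0 Pp; have Z1 := Z_gt0 (fun j => v j + w j) n0 Pp.
apply/funext => j; rewrite /mw_update.
have -> : \sum_(k < n) P k * expR (v k) / (\sum_(k0 < n) P k0 * expR (v k0)) * expR (w k)
  = (\sum_(k < n) P k * expR (v k + w k)) / (\sum_(k0 < n) P k0 * expR (v k0)).
  rewrite mulr_suml; apply: eq_bigr => k _; rewrite expRD; field; exact: lt0r_neq0.
rewrite expRD; field; by rewrite (lt0r_neq0 Z0) (lt0r_neq0 Z1).
Qed.

Lemma mw_zero (R : realType) (n : nat) (P v : 'I_n -> R) :
  (forall j, v j = 0) -> \sum_(j < n) P j = 1 -> mw_update P v = P.
Proof.
move=> v0 P1; apply/funext => j; rewrite /mw_update.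
under eq_bigr => k _ do rewrite v0 expR0 mulr1.
by rewrite v0 expR0 mulr1 P1 divr1.
Qed.

Lemma aln (R : realType) (a q p : R) :
  0 <= a -> 0 < q -> 0 < p -> a * ln (a / q) - a * ln (a / p) = a * ln (p / q).
Proof.
move=> a0 q0 p0; have [->|ap] := eqVneq a 0; first by rewrite !mul0r subr0.
have a0' : 0 < a by rewrite lt0r ap.
rewrite !ln_div ?posrE //; ring.
Qed.

Lemma lnratio (R : realType) (n : nat) (Q v : 'I_n -> R) j :
  (0 < n)%N -> pos_dist Q ->
  ln (mw_update Q v j / Q j) = v j - ln (\sum_(k < n) Q k * expR (v k)).
Proof.
move=> n0 [Qp Q1]; have Z0 := Z_gt0 v n0 Qp.
rewrite /mw_update.
have -> : Q j * expR (v j) / (\sum_(k < n) Q k * expR (v k)) / Q j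
   = expR (v j) / (\sum_(k < n) Q k * expR (v k)).
  field; by rewrite (lt0r_neq0 Z0) (lt0r_neq0 (Qp j)).
by rewrite ln_div ?posrE ?expR_gt0 // expRK.
Qed.

Lemma three_pt (R : realType) (n : nat) (Q v u : 'I_n -> R) :
  (0 < n)%N -> pos_dist Q -> (forall j, 0 <= u j) -> \sum_(j < n) u j = 1 ->
  KL u Q - KL u (mw_update Q v) - KL (mw_update Q v) Q
  = dotv (fun j => u j - mw_update Q v j) v.
Proof.
move=> n0 Qd u0 u1; have [Qp Q1] := Qd.
have [P'p P'1] := mw_pos v n0 Qd.
set P' := mw_update Q v in P'p P'1 *.
set lZ := ln (\sum_(k < n) Q k * expR (v k)).
have e1 : KL u Q - KL u P' = \sum_(j < n) u j * v j - lZ.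
  rewrite /KL -sumrB.
  transitivity (\sum_(j < n) (u j * v j - u j * lZ)).
    apply: eq_bigr => j _; rewrite aln // /P' lnratio // -/lZ; ring.
  by rewrite sumrB -mulr_suml u1 mul1r.
have e2 : KL P' Q = \sum_(j < n) P' j * v j - lZ.
  rewrite /KL.
  transitivity (\sum_(j < n) (P' j * v j - P' j * lZ)).
    apply: eq_bigr => j _; rewrite /P' lnratio // -/lZ -/P'; ring.
  by rewrite sumrB -mulr_suml P'1 mul1r.
rewrite e1 e2 /dotv.
transitivity (\sum_(j < n) u j * v j - \sum_(j < n) P' j * v j); first ring.
rewrite -sumrB; apply: eq_bigr => j _; ring.
Qed.

Lemma wcs (R : realType) (n : nat) (p u v : 'I_n -> R) :
  (forall j, 0 < p j) ->
  \sum_(j < n) u j * v j <=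
  Num.sqrt (\sum_(j < n) u j ^+ 2 / p j) * Num.sqrt (\sum_(j < n) p j * v j ^+ 2).
Proof.
move=> pp.
set A := \sum_(j < n) u j ^+ 2 / p j; set B := \sum_(j < n) p j * v j ^+ 2.
have A0 : 0 <= A by apply: sumr_ge0 => j _; rewrite divr_ge0 // ?sqr_ge0 // ltW.
have B0 : 0 <= B by apply: sumr_ge0 => j _; rewrite mulr_ge0 // ?sqr_ge0 // ltW.
set a := Num.sqrt A; set b := Num.sqrt B.
have a0 : 0 <= a by exact: sqrtr_ge0.
have b0 : 0 <= b by exact: sqrtr_ge0.
have aA : a ^+ 2 = A by rewrite sqr_sqrtr.
have bB : b ^+ 2 = B by rewrite sqr_sqrtr.
have key : 2 * (a * b) * (\sum_(j < n) u j * v j) <= 2 * (a * b) * (a * b).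
  have -> : 2 * (a * b) * (a * b) = b ^+ 2 * A + a ^+ 2 * B by rewrite -aA -bB; ring.
  rewrite mulr_sumr /A /B !mulr_sumr -big_split /=; apply: ler_sum => j _.
  have pj := pp j.
  rewrite -subr_ge0.
  have -> : b ^+ 2 * (u j ^+ 2 / p j) + a ^+ 2 * (p j * v j ^+ 2) - 2 * (a * b) * (u j * v j)
     = (u j * b - p j * v j * a) ^+ 2 / p j by field; rewrite lt0r_neq0.
  by rewrite divr_ge0 ?sqr_ge0 // ltW.
have [ab0|abp] := eqVneq (a * b) 0.
  rewrite ab0; move/eqP: ab0; rewrite mulf_eq0 => /orP[] /eqP.
    move=> /eqP; rewrite sqrtr_eq0 => A0'.
    have Ae : A = 0 by apply/eqP; rewrite eq_le A0' A0.
    have uz : forall j, u j = 0.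
      move=> j; have := @psumr_eq0P _ _ xpredT (fun i => u i ^+ 2 / p i)
        (fun i _ => divr_ge0 (sqr_ge0 _) (ltW (pp i))) Ae j isT.
      move=> /eqP.
      rewrite mulf_eq0 invr_eq0 (negbTE (lt0r_neq0 (pp j))) orbF sqrf_eq0 => /eqP; done.
    by rewrite big1 // => j _; rewrite uz mul0r.
  move=> /eqP; rewrite sqrtr_eq0 => B0'.
  have Be : B = 0 by apply/eqP; rewrite eq_le B0' B0.
  have vz : forall j, v j = 0.
    move=> j; have := @psumr_eq0P _ _ xpredT (fun i => p i * v i ^+ 2)
        (fun i _ => mulr_ge0 (ltW (pp i)) (sqr_ge0 _)) Be j isT.
    move=> /eqP.
    by rewrite mulf_eq0 (negbTE (lt0r_neq0 (pp j))) /= sqrf_eq0 => /eqP.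
  by rewrite big1 // => j _; rewrite vz mulr0.
have abg : 0 < 2 * (a * b) by rewrite mulr_gt0 // lt0r abp mulr_ge0.
by rewrite -(ler_pM2l abg).
Qed.

Lemma unif_pos (R : realType) (n : nat) : (0 < n)%N -> pos_dist (@uniform_dist R n).
Proof.
move=> n0; split; first by move=> j; rewrite /uniform_dist invr_gt0 ltr0n.
rewrite /uniform_dist sumr_const card_ord -[_^-1 *+ n]mulr_natr mulVf //.
by rewrite pnatr_eq0 -lt0n.
Qed.

Lemma iter_pos (R : realType) (n : nat) eta ell t :
  (0 < n)%N -> pos_dist (@oh_iter R n eta ell t).
Proof.
move=> n0; elim: t => [|[|s] IH]; first exact: unif_pos.
  exact: unif_pos.
exact: mw_pos.
Qed.

Lemma tilde_pos (R : realType) (n : nat) eta ell t :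
  (0 < n)%N -> pos_dist (@oh_tilde R n eta ell t).
Proof.
move=> n0; case: t => [|s]; first exact: unif_pos.
exact/mw_pos/iter_pos.
Qed.

Lemma x_rel (R : realType) (n : nat) eta ell s :
  (0 < n)%N ->
  @oh_iter R n eta ell s.+1 =
  mw_update (oh_tilde eta ell s) (fun j => - eta * loss0 ell s j).
Proof.
move=> n0; case: s => [|s].
  by rewrite mw_zero //= ?mulr0 //; case: (unif_pos R n0).
rewrite /oh_tilde mwK; last exact: iter_pos.
  rewrite [LHS]/=; congr mw_update; apply/funext => j /=; ring.
exact: n0.
Qed.

Lemma tilde_rel (R : realType) (n : nat) eta ell s :
  (0 < n)%N ->
  @oh_tilde R n eta ell s.+1 =
  mw_update (oh_tilde eta ell s) (fun j => - eta * loss0 ell s.+1 j).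
Proof.
move=> n0; rewrite {1}/oh_tilde (x_rel _ _ _ n0) mwK //; last exact: tilde_pos.
congr mw_update; apply/funext => j /=; ring.
Qed.

Lemma pos_le1 (R : realType) (n : nat) (P : 'I_n -> R) j : pos_dist P -> P j <= 1.
Proof.
move=> [Pp <-]; rewrite (bigD1 j) //= lerDl; apply: sumr_ge0 => i _; exact: ltW.
Qed.

Lemma step (R : realType) (n : nat) eta ell (xs : 'I_n -> R) s :
  (0 < n)%N -> 0 < eta -> in_simplex xs ->
  dotv (fun j => oh_iter eta ell s.+1 j - xs j) (loss0 ell s.+1)
  = dotv (fun j => oh_iter eta ell s.+1 j - oh_tilde eta ell s.+1 j)
         (fun j => loss0 ell s.+1 j - loss0 ell s j)
    + eta^-1 * (KL xs (oh_tilde eta ell s) - KL xs (oh_tilde eta ell s.+1)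
                - KL (oh_tilde eta ell s.+1) (oh_iter eta ell s.+1)
                - KL (oh_iter eta ell s.+1) (oh_tilde eta ell s)).
Proof.
move=> n0 e0 [xs0 xs1].
have h1 := three_pt (fun j => - eta * loss0 ell s.+1 j) n0 (tilde_pos eta ell s n0) xs0 xs1.
rewrite -tilde_rel // in h1.
have [tp t1] := tilde_pos eta ell s.+1 n0.
have h2 := three_pt (fun j => - eta * loss0 ell s j) n0 (tilde_pos eta ell s n0)
   (fun j => ltW (tp j)) t1.
rewrite -x_rel // in h2.
have -> : KL xs (oh_tilde eta ell s) - KL xs (oh_tilde eta ell s.+1)
                - KL (oh_tilde eta ell s.+1) (oh_iter eta ell s.+1)
                - KL (oh_iter eta ell s.+1) (oh_tilde eta ell s)
  = (KL xs (oh_tilde eta ell s) - KL xs (oh_tilde eta ell s.+1)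
      - KL (oh_tilde eta ell s.+1) (oh_tilde eta ell s))
    + (KL (oh_tilde eta ell s.+1) (oh_tilde eta ell s)
      - KL (oh_tilde eta ell s.+1) (oh_iter eta ell s.+1)
      - KL (oh_iter eta ell s.+1) (oh_tilde eta ell s)) by ring.
rewrite h1 h2 /dotv -big_split mulr_sumr -big_split /=.
apply: eq_bigr => j _; field; exact: lt0r_neq0.
Qed.

Lemma cs_term (R : realType) (n : nat) (x y d : 'I_n -> R) :
  pos_dist x -> pos_dist y ->
  dotv (fun j => x j - y j) d
  <= dual_norm x (fun j => x j - y j) * Num.sqrt (varP x d).
Proof.
move=> [xp x1] [yp y1].
have -> : dotv (fun j => x j - y j) d
   = \sum_(j < n) (x j - y j) * (d j - dotv x d).
  have : \sum_(j < n) (x j - y j) * dotv x d = 0.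
    by rewrite -mulr_suml sumrB x1 y1 subrr mul0r.
  rewrite /dotv => h; apply/esym; under eq_bigr => j _ do rewrite mulrBr.
  by rewrite sumrB h subr0.
exact: wcs.
Qed.

Lemma kl_bound (R : realType) (n : nat) (xs P : 'I_n -> R) :
  (0 < n)%N -> in_simplex xs -> pos_dist P ->
  KL xs (@uniform_dist R n) - KL xs P <= ln n%:R.
Proof.
move=> n0 [xs0 xs1] Pd; have [Pp P1] := Pd.
have [up _] := unif_pos R n0.
rewrite /KL -sumrB.
have -> : ln (n%:R : R) = \sum_(j < n) xs j * ln n%:R by rewrite -mulr_suml xs1 mul1r.
apply: ler_sum => j _.
rewrite aln // /uniform_dist ln_div ?posrE ?invr_gt0 ?ltr0n // lnV ?posrE ?ltr0n //.
rewrite opprK mulrDr.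
by rewrite gerDr mulr_ge0_le0 // ln_le0 // (pos_le1 _ Pd).
Qed.

Lemma sum_eq (R : realType) (n : nat) eta (T : nat) ell (xs : 'I_n -> R) :
  (0 < n)%N -> 0 < eta -> in_simplex xs ->
  \sum_(1 <= t < T.+1) dotv (fun j => oh_iter eta ell t j - xs j) (loss0 ell t)
  = \sum_(1 <= t < T.+1)
       dotv (fun j => oh_iter eta ell t j - oh_tilde eta ell t j)
         (fun j => loss0 ell t j - loss0 ell t.-1 j)
    + eta^-1 * (KL xs (oh_tilde eta ell 0) - KL xs (oh_tilde eta ell T))
    - eta^-1 * \sum_(1 <= t < T.+1) KL (oh_tilde eta ell t) (oh_iter eta ell t)
    - eta^-1 * \sum_(1 <= t < T.+1) KL (oh_iter eta ell t) (oh_tilde eta ell t.-1).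
Proof.
move=> n0 e0 xsd; elim: T => [|T IH].
  by rewrite !big_geq // subrr !mulr0 !subr0 addr0.
rewrite !(big_nat_recr T.+1) //= IH (@step R n eta ell xs T n0 e0 xsd); ring.
Qed.

Theorem lemmaA5 (R : realType) (n : nat) (eta : R) (T : nat)
    (ell : nat -> 'I_n -> R) (xstar : 'I_n -> R) :
  (0 < n)%N -> 0 < eta -> in_simplex xstar ->
  \sum_(1 <= t < T.+1)
      dotv (fun j => oh_iter eta ell t j - xstar j) (loss0 ell t)
  <= ln (n%:R) / eta
     + \sum_(1 <= t < T.+1)
         dual_norm (oh_iter eta ell t)
           (fun j => oh_iter eta ell t j - oh_tilde eta ell t j)
         * Num.sqrt (varP (oh_iter eta ell t)
                       (fun j => loss0 ell t j - loss0 ell t.-1 j))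
     - eta^-1 * \sum_(1 <= t < T.+1) KL (oh_tilde eta ell t) (oh_iter eta ell t)
     - eta^-1 * \sum_(1 <= t < T.+1) KL (oh_iter eta ell t) (oh_tilde eta ell t.-1).
Proof.
move=> n0 e0 xsd.
rewrite (@sum_eq R n eta T ell xstar n0 e0 xsd).
have h1 : \sum_(1 <= t < T.+1)
       dotv (fun j => oh_iter eta ell t j - oh_tilde eta ell t j)
         (fun j => loss0 ell t j - loss0 ell t.-1 j)
  <= \sum_(1 <= t < T.+1)
         dual_norm (oh_iter eta ell t)
           (fun j => oh_iter eta ell t j - oh_tilde eta ell t j)
         * Num.sqrt (varP (oh_iter eta ell t)
                       (fun j => loss0 ell t j - loss0 ell t.-1 j)).
  apply: ler_sum => t _; apply: cs_term; [exact: iter_pos | exact: tilde_pos].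
have h2 : eta^-1 * (KL xstar (oh_tilde eta ell 0) - KL xstar (oh_tilde eta ell T))
   <= ln (n%:R) / eta.
  rewrite mulrC ler_pM2r ?invr_gt0 //; apply: kl_bound => //; exact: tilde_pos.
lra.
Qed.
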